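(* Let $\mathcal{C}$ be a full reflective subcategory of $\mathsf{Top}$, closed under isomorphisms, which is contained in the category $\mathsf{Haus}$ of Hausdorff spaces and contains a two-point discrete space. Then the only object of $\mathcal{C}$ that is finitely generated with respect to embeddings is the empty space.
   Context: An embedding is an injective continuous map $m:X\to Y$ such that every open set of $X$ has the form $m^{-1}(U)$ for $U$ open in $Y$. An object $X$ of $\mathcal{C}$ is finitely generated w.r.t. embeddings if for every directed diagram $(Z_i)_{i\in I}$ in $\mathcal{C}$ (indexed by a directed poset, i.e. every finite subset has an upper bound) whose connecting morphisms $z_{i,j}$ are embeddings, with colimit cocone $c_i:Z_i\to Z$ in $\mathcal{C}$, every morphism $f:X\to Z$ factorizes as $f=c_i\cdot g$ for some $i$ and $g:X\to Z_i$, and if also $f=c_i\cdot g'$ then $z_{i,j}\cdot g=z_{i,j}\cdot g'$ for some connecting morphism $z_{i,j}$. *)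

(* Defs.v *)
From Stdlib Require List.
From mathcomp Require Import all_boot all_classical topology.
Set Implicit Arguments. Unset Strict Implicit. Unset Printing Implicit Defensive.
Local Open Scope classical_set_scope.

Definition embedding (X Y : topologicalType) (m : X -> Y) : Prop :=
  injective m /\ continuous m /\
  forall A : set X, open A -> exists U : set Y, open U /\ A = m @^-1` U.

Definition homeomorphic (X Y : topologicalType) : Prop :=
  exists (f : X -> Y) (g : Y -> X),
    continuous f /\ continuous g /\ (forall x, g (f x) = x) /\ (forall y, f (g y) = y).

(* A full subcategory of Top is given by a predicate on objects; it is full
   (all continuous maps between objects of C are morphisms of C). *)

Definition reflective (C : topologicalType -> Prop) : Prop :=
  forall X : topologicalType, exists (R : topologicalType) (eta : X -> R),
    C R /\ continuous eta /\
    forall (Y : topologicalType), C Y -> forall f : X -> Y, continuous f ->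
      exists g : R -> Y, continuous g /\ (forall x, g (eta x) = f x) /\
        (forall g' : R -> Y, continuous g' -> (forall x, g' (eta x) = f x) ->
           forall r, g' r = g r).

Definition iso_closed (C : topologicalType -> Prop) : Prop :=
  forall X Y : topologicalType, C X -> homeomorphic X Y -> C Y.

Definition directed_poset (I : Type) (le : I -> I -> Prop) : Prop :=
  (forall i, le i i) /\
  (forall i j k, le i j -> le j k -> le i k) /\
  (forall i j, le i j -> le j i -> i = j) /\
  (forall s : list I, exists k, forall i, List.In i s -> le i k).

Definition is_diagram (I : Type) (le : I -> I -> Prop)
    (Z : I -> topologicalType) (z : forall i j, le i j -> Z i -> Z j) : Prop :=
  (forall i j (h : le i j), continuous (z i j h)) /\
  (forall i (h : le i i) x, z i i h x = x) /\
  (forall i j k (h1 : le i j) (h2 : le j k) (h3 : le i k) x,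
      z j k h2 (z i j h1 x) = z i k h3 x).

Definition is_cocone (I : Type) (le : I -> I -> Prop)
    (Z : I -> topologicalType) (z : forall i j, le i j -> Z i -> Z j)
    (W : topologicalType) (d : forall i, Z i -> W) : Prop :=
  (forall i, continuous (d i)) /\
  (forall i j (h : le i j) x, d j (z i j h x) = d i x).

Definition is_colimit_in (C : topologicalType -> Prop) (I : Type)
    (le : I -> I -> Prop) (Z : I -> topologicalType)
    (z : forall i j, le i j -> Z i -> Z j)
    (Zc : topologicalType) (c : forall i, Z i -> Zc) : Prop :=
  C Zc /\ is_cocone z c /\
  forall (W : topologicalType) (d : forall i, Z i -> W), C W -> is_cocone z d ->
    exists u : Zc -> W, continuous u /\ (forall i x, u (c i x) = d i x) /\
      (forall u' : Zc -> W, continuous u' -> (forall i x, u' (c i x) = d i x) ->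
         forall y, u' y = u y).

Definition fg_wrt_embeddings (C : topologicalType -> Prop) (X : topologicalType)
  : Prop :=
  forall (I : Type) (le : I -> I -> Prop) (Z : I -> topologicalType)
         (z : forall i j, le i j -> Z i -> Z j)
         (Zc : topologicalType) (c : forall i, Z i -> Zc),
    directed_poset le -> (forall i, C (Z i)) -> is_diagram z ->
    (forall i j (h : le i j), embedding (z i j h)) ->
    is_colimit_in C z c ->
    forall f : X -> Zc, continuous f ->
      (exists i (g : X -> Z i), continuous g /\ forall x, f x = c i (g x)) /\
      (forall i (g g' : X -> Z i), continuous g -> continuous g' ->
         (forall x, f x = c i (g x)) -> (forall x, f x = c i (g' x)) ->
         exists j (h : le i j), forall x, z i j h (g x) = z i j h (g' x)).

(* Main.v *)
Require Import Defs.
From HB Require Import structures.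
From mathcomp Require Import all_boot all_classical topology.
From Stdlib Require List.
Unset Printing Implicit Defensive.
Local Open Scope classical_set_scope.

Definition T0 := nat -> nat -> bool.
Inductive pt := PA | PB | PX of T0 & nat.
HB.instance Definition _ := gen_eqMixin pt.
HB.instance Definition _ := gen_choiceMixin pt.

Definition lfin {A : Type} (F : set A) := exists s : list A, forall x, F x -> List.In x s.
Definition Idx := ({F : set T0 | lfin F} * nat)%type.
Definition iF (i : Idx) : set T0 := proj1_sig i.1.
Definition iN (i : Idx) : nat := i.2.
Definition leI (i j : Idx) : Prop := (iF i `<=` iF j) /\ (iN i <= iN j)%N.

Definition memi (i : Idx) (p : pt) : Prop :=
  match p with PX t m => iF i t \/ (m <= iN i)%N | _ => True end.

Definition Zt (i : Idx) := {p : pt | memi i p}.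
HB.instance Definition _ (i : Idx) := gen_eqMixin (Zt i).
HB.instance Definition _ (i : Idx) := gen_choiceMixin (Zt i).

Definition aZ (i : Idx) : Zt i := exist _ PA I.
Definition bZ (i : Idx) : Zt i := exist _ PB I.

Lemma Zt_eq (i : Idx) (x y : Zt i) : proj1_sig x = proj1_sig y -> x = y.
Proof. by case: x => p hp; case: y => q hq /= e; apply: eq_exist. Qed.

Definition openZ (i : Idx) (Q : set (Zt i)) : Prop :=
  (Q (aZ i) -> exists K, forall (z : Zt i) t m, proj1_sig z = PX t m ->
      iF i t -> (iN i < m)%N -> (K <= m)%N -> Q z) /\
  (Q (bZ i) -> exists H : list T0, forall (z : Zt i) t m, proj1_sig z = PX t m ->
      (m <= iN i)%N -> ~ List.In t H -> Q z).

Lemma openZ_T i : openZ i setT.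
Proof. by split=> _; [exists 0%N | exists nil]. Qed.

Lemma openZ_I i : setI_closed (openZ i).
Proof.
move=> A B [Aa Ab] [Ba Bb]; split.
  move=> [/Aa [K1 H1] /Ba [K2 H2]]; exists (maxn K1 K2) => z t m e Ft nm Km.
  split; [apply: (H1 z t m) | apply: (H2 z t m)] => //.
    exact: leq_trans (leq_maxl _ _) Km.
  exact: leq_trans (leq_maxr _ _) Km.
move=> [/Ab [H1 P1] /Bb [H2 P2]]; exists (H1 ++ H2) => z t m e mn nin.
split; [apply: (P1 z t m) | apply: (P2 z t m)] => // hin; apply: nin;
  apply: List.in_or_app; tauto.
Qed.

Lemma openZ_U i (J : Type) (f : J -> set (Zt i)) :
  (forall j, openZ i (f j)) -> openZ i (\bigcup_j f j).
Proof.
move=> fo; split.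
  move=> [j _ fja]; have [/(_ fja) [K HK] _] := fo j.
  by exists K => z t m e Ft nm Km; exists j => //; apply: (HK z t m).
move=> [j _ fjb]; have [_ /(_ fjb) [H HH]] := fo j.
by exists H => z t m e mn nin; exists j => //; apply: (HH z t m).
Qed.

HB.instance Definition _ (i : Idx) :=
  isOpenTopological.Build (Zt i) (@openZ_T i) (@openZ_I i) (@openZ_U i).

Lemma openZE (i : Idx) (Q : set (Zt i)) : open Q = openZ i Q.
Proof. by []. Qed.
Definition Ut := pt.
HB.instance Definition _ := gen_eqMixin Ut.
HB.instance Definition _ := gen_choiceMixin Ut.

Definition openU (O : set Ut) : Prop :=
  forall i : Idx, openZ i (fun z : Zt i => O (proj1_sig z)).

Lemma openU_T : openU setT.
Proof. by move=> i; apply: openZ_T. Qed.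

Lemma openU_I : setI_closed openU.
Proof. by move=> A B HA HB i; exact: (@openZ_I i _ _ (HA i) (HB i)). Qed.

Lemma openU_U (J : Type) (f : J -> set Ut) :
  (forall j, openU (f j)) -> openU (\bigcup_j f j).
Proof.
move=> fo i.
have -> : (fun z : Zt i => (\bigcup_j f j) (proj1_sig z)) =
          \bigcup_j (fun z : Zt i => f j (proj1_sig z)).
  by apply/funext => z; apply/propext; split => -[j _ h]; exists j.
by apply: openZ_U => j; apply: fo.
Qed.

HB.instance Definition _ :=
  isOpenTopological.Build Ut openU_T openU_I openU_U.

Lemma openUE (O : set Ut) : open O = openU O.
Proof. by []. Qed.

Lemma memi_le (i j : Idx) (h : leI i j) (p : pt) : memi i p -> memi j p.
Proof.
case: h => hF hN; case: p => //= t m [Ft|mn]; [left; exact: hF|right].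
exact: leq_trans mn hN.
Qed.

Arguments memi_le {i j} h {p}.

Definition zmap (i j : Idx) (h : leI i j) (x : Zt i) : Zt j :=
  exist _ (proj1_sig x) (memi_le h (proj2_sig x)).

Arguments zmap {i j} h x.

Definition vZ {i : Idx} (x : Zt i) : Ut := proj1_sig x.

Lemma vZ_cont (i : Idx) : continuous (@vZ i).
Proof. by apply/continuousP => O; rewrite openUE => /(_ i). Qed.

Lemma zmap_cont (i j : Idx) (h : leI i j) : continuous (zmap h).
Proof.
apply/continuousP => Q; rewrite !openZE /preimage /= => -[Qa Qb]; split.
  move=> Qza; change (Q (zmap h (aZ i))) in Qza.
  have e0 : zmap h (aZ i) = aZ j by apply: Zt_eq.
  rewrite e0 in Qza; move: Qza => /Qa [K HK]; exists (maxn K (iN j).+1) => z t m e Ft nm Km.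
  apply: (HK _ t m) => //; first by case: (h) => hF _; apply: hF.
    exact: leq_trans (leq_maxr _ _) Km.
  exact: leq_trans (leq_maxl _ _) Km.
move=> Qzb; change (Q (zmap h (bZ i))) in Qzb.
have e0 : zmap h (bZ i) = bZ j by apply: Zt_eq.
rewrite e0 in Qzb; move: Qzb => /Qb [H HH]; exists H => z t m e mn nin.
apply: (HH _ t m) => //; case: (h) => _ hN; exact: leq_trans mn hN.
Qed.

Lemma zmap_emb (i j : Idx) (h : leI i j) : embedding (zmap h).
Proof.
split; first by move=> x y /(congr1 (@proj1_sig _ _)) /= e; apply: Zt_eq.
split; first exact: zmap_cont.
move=> Q; rewrite openZE => -[Qa Qb].
have [sF HsF] := proj2_sig i.1.
exists (fun y : Zt j => (exists x : Zt i, proj1_sig x = proj1_sig y /\ Q x)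
                         \/ ~ memi i (proj1_sig y)).
split; last first.
  apply/funext => x; apply/propext; split.
    by move=> Qx; left; exists x.
  move=> [[x' [e Qx']]|nm] /=.
    by have -> : x = x' by apply: Zt_eq.
  by exfalso; apply: nm; exact: (proj2_sig x).
rewrite openZE; split.
  move=> [[x [e Qx]]|nm]; last by exfalso; apply: nm.
  have xa : x = aZ i by apply: Zt_eq.
  rewrite xa in Qx; have [K HK] := Qa Qx.
  exists (maxn K (iN j).+1) => z t m e' Ft nm Km.
  have [mz|nmz] := EM (memi i (proj1_sig z)); last by right.
  left; exists (exist _ (proj1_sig z) mz); split => //.
  have nim : (iN i < m)%N.
    apply: leq_ltn_trans (proj2 h) _; exact: leq_trans (leq_maxr _ _) Km.
  apply: (HK _ t m) => //.
  - move: mz; rewrite e' /= => -[//|]; by rewrite leqNgt nim.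
  - exact: leq_trans (leq_maxl _ _) Km.
move=> [[x [e Qx]]|nm]; last by exfalso; apply: nm.
have xb : x = bZ i by apply: Zt_eq.
rewrite xb in Qx; have [H HH] := Qb Qx.
exists (sF ++ H) => z t m e' mn nin.
have [mz|nmz] := EM (memi i (proj1_sig z)); last by right.
left; exists (exist _ (proj1_sig z) mz); split => //.
move: (mz); rewrite e' /= => -[Ft|mi].
  by exfalso; apply: nin; apply: List.in_or_app; left; apply: HsF.
apply: (HH _ t m) => // hin; apply: nin; apply: List.in_or_app; by right.
Qed.
Lemma lfin0 : lfin (@set0 T0).
Proof. by exists nil. Qed.

Lemma lfinU (A B : set T0) : lfin A -> lfin B -> lfin (A `|` B).
Proof.
move=> [s Hs] [s' Hs']; exists (s ++ s') => x [/Hs|/Hs'] h;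
  apply: List.in_or_app; tauto.
Qed.

Lemma lfin1 (t : T0) : lfin [set t].
Proof. by exists (t :: nil) => x ->; left. Qed.

Lemma directedI : directed_poset leI.
Proof.
split; first by move=> i; split => //.
split; first by move=> i j k [h1 h2] [h3 h4]; split;
  [exact: subset_trans h3|exact: leq_trans h4].
split.
  move=> [[F Fp] n] [[G Gp] n'] [/= h1 h2] [/= h3 h4].
  have eFG : F = G by apply/seteqP; split.
  subst G; have -> : Fp = Gp by apply: Prop_irrelevance.
  by have -> : n = n' by apply/eqP; rewrite eqn_leq h2 h4.
elim=> [|i s [k Hk]].
  by exists (exist _ set0 lfin0, 0%N).
pose F := iF i `|` iF k.
have Fp : lfin F by apply: lfinU; [exact: (proj2_sig i.1)|exact: (proj2_sig k.1)].
exists (exist _ F Fp, maxn (iN i) (iN k)) => x [<-|/Hk [h1 h2]].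
  by split; [move=> t ht; left|exact: leq_maxl].
split; first by move=> t /h1 ht; right.
exact: leq_trans h2 (leq_maxr _ _).
Qed.

Lemma diagramI : @is_diagram Idx leI Zt (@zmap).
Proof.
split; first by move=> i j h; exact: zmap_cont.
split; first by move=> i h x; apply: Zt_eq.
by move=> i j k h1 h2 h3 x; apply: Zt_eq.
Qed.
Definition is_refl (C : topologicalType -> Prop) (X R : topologicalType) (eta : X -> R) :=
  C R /\ continuous eta /\
    forall (Y : topologicalType), C Y -> forall f : X -> Y, continuous f ->
      exists g : R -> Y, continuous g /\ (forall x, g (eta x) = f x) /\
        (forall g' : R -> Y, continuous g' -> (forall x, g' (eta x) = f x) ->
           forall r, g' r = g r).

Arguments is_refl C {X R} eta.

Lemma refl_uniq (C : topologicalType -> Prop) (X R : topologicalType) (eta : X -> R) :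
  is_refl C eta -> forall W : topologicalType, C W -> forall g1 g2 : R -> W,
  continuous g1 -> continuous g2 -> (forall x, g1 (eta x) = g2 (eta x)) ->
  forall r, g1 r = g2 r.
Proof.
move=> [CR [ce U]] W CW g1 g2 c1 c2 e r.
have cf : continuous (g1 \o eta) by move=> x; apply: continuous_comp; [exact: ce|exact: c1].
have [g [cg [ge gu]]] := U W CW _ cf.
rewrite (gu g1 c1) //; rewrite (gu g2 c2) // => x; by rewrite -e.
Qed.

Arguments refl_uniq {C X R eta} hr {W} CW {g1 g2}.

Definition idxp (p : pt) : Idx :=
  (exist _ set0 lfin0, match p with PX _ m => m | _ => 0%N end).
Lemma mem_idxp p : memi (idxp p) p.
Proof. by case: p => //= t m; right. Qed.
Definition inZ (p : pt) : Zt (idxp p) := exist _ p (mem_idxp p).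

Lemma cocone_compat (W : topologicalType) (d : forall i, Zt i -> W) :
  is_cocone (@zmap) d -> forall i (x : Zt i),
  d i x = d (idxp (proj1_sig x)) (inZ (proj1_sig x)).
Proof.
move=> [_ dc] i x.
have [_ [_ [_ ub]]] := directedI.
have [k Hk] := ub (i :: idxp (proj1_sig x) :: nil).
have h1 : leI i k by apply: Hk; left.
have h2 : leI (idxp (proj1_sig x)) k by apply: Hk; right; left.
rewrite -(dc _ _ h1 x) -(dc _ _ h2 (inZ _)); congr (d k _); exact: Zt_eq.
Qed.

Arguments cocone_compat {W d} dco {i} x.

Lemma colimitI (C : topologicalType -> Prop) (R : topologicalType) (eta : Ut -> R) :
  is_refl C eta -> is_colimit_in C (@zmap) (fun i (x : Zt i) => eta (vZ x)).
Proof.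
move=> hr; have [CR [ce U]] := hr.
split => //; split.
  split; last by [].
  by move=> i x; apply: continuous_comp; [exact: vZ_cont|exact: ce].
move=> W d CW dco.
pose u0 (p : Ut) : W := d (idxp p) (inZ p).
have u0e : forall i (x : Zt i), u0 (vZ x) = d i x.
  by move=> i x; rewrite (cocone_compat dco x).
have cu0 : continuous u0.
  apply/continuousP => O Oo; rewrite openUE => i.
  have [dcont _] := dco.
  have := (proj1 (continuousP _) (dcont i) O Oo); rewrite openZE.
  have -> : (d i @^-1` O) = (fun z : Zt i => (u0 @^-1` O) (proj1_sig z)) => //.
  apply/funext => z /=; rewrite /preimage /=; apply/propext.
  by rewrite -(u0e i z).
have [g [cg [ge gu]]] := U W CW u0 cu0.
exists g; split => //; split.
  by move=> i x; rewrite ge u0e.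
move=> u' cu' hu'; apply: gu => // p.
by rewrite (hu' _ (inZ p)).
Qed.
Lemma collapseU (V W : set Ut) : open V -> V PA -> open W -> W PB ->
  exists p, V p /\ W p.
Proof.
rewrite !openUE => Vo VA Wo WB.
have hV : forall t, exists K, forall m, (0 < m)%N -> (K <= m)%N -> V (PX t m).
  move=> t; pose it : Idx := (exist _ [set t] (lfin1 t), 0%N).
  have [Va _] := Vo it; have [K HK] := Va VA.
  exists K => m m0 Km.
  have mz : memi it (PX t m) by left.
  exact: (HK (exist _ (PX t m) mz) t m erefl erefl m0 Km).
have hW : forall m, exists H : list T0, forall t, ~ List.In t H -> W (PX t m).
  move=> m; pose jm : Idx := (exist _ set0 lfin0, m).
  have [_ Wb] := Wo jm; have [H HH] := Wb WB.
  exists H => t nin.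
  have mz : memi jm (PX t m) by right.
  exact: (HH (exist _ (PX t m) mz) t m erefl (leqnn m) nin).
have [Kf HKf] := choice hV; have [Hf HHf] := choice hW.
pose d0 : T0 := fun _ _ => false.
pose ts : T0 := fun m k => ~~ (List.nth k (Hf m) d0) m k.
pose M := maxn (Kf ts) 1.
have nin : ~ List.In ts (Hf M).
  move=> /(List.In_nth _ _ d0) [k [_ ek]].
  have e2 : ts M k = ~~ (List.nth k (Hf M) d0 M k) by [].
  rewrite ek in e2; move: e2; by case: (ts M k).
exists (PX ts M); split; last exact: HHf.
apply: HKf; [exact: leq_maxr|exact: leq_maxl].
Qed.
Lemma eta_collapse (C : topologicalType -> Prop) (R : topologicalType) (eta : Ut -> R) :
  is_refl C eta -> hausdorff_space R -> eta PA = eta PB.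
Proof.
move=> [CR [ce _]] hs; apply: hs => A B nA nB.
have := ce PA _ nA; have := ce PB _ nB.
rewrite /= !nbhsE => -[W [Wo Wb] WB] [V [Vo Va] VA].
have [p [Vp Wp]] := @collapseU V W Vo Va Wo Wb.
by exists (eta p); split; [apply: VA|apply: WB].
Qed.

Lemma open_local (Y : topologicalType) (P : set Y) :
  (forall y, P y -> exists O, open O /\ O y /\ O `<=` P) -> open P.
Proof.
move=> h; rewrite openE => y Py; have [O [Oo [Oy OP]]] := h y Py.
by rewrite /interior nbhsE; exists O.
Qed.

Lemma cont_to_discrete (Y T : topologicalType) (f : Y -> T) :
  (forall y, exists O, open O /\ O y /\ forall y', O y' -> f y' = f y) ->
  continuous f.
Proof.
move=> h; apply/continuousP => A _; apply: open_local => y Ay.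
have [O [Oo [Oy Oc]]] := h y; exists O; split => //; split => // y' Oy'.
by rewrite /preimage /= Oc.
Qed.

Lemma fiber_open (Y T : topologicalType) (f : Y -> T) :
  (forall A : set T, open A) -> continuous f -> forall v, open [set y | f y = v].
Proof. by move=> Td cf v; apply: (proj1 (continuousP _) cf [set v]). Qed.

Lemma open_forall_list (Y : topologicalType) (A : Type) (L : list A) (S : A -> set Y) :
  (forall a, open (S a)) -> open [set y | forall a, List.In a L -> S a y].
Proof.
move=> So; elim: L => [|a L IH].
  have -> : [set y : Y | forall a, List.In a nil -> S a y] = setT.
    by apply/funext => y; apply/propext; split => // _ a [].
  exact: openT.
have -> : [set y : Y | forall b, List.In b (a :: L) -> S b y] =
   S a `&` [set y | forall b, List.In b L -> S b y].
  apply/funext => y; apply/propext; split.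
    by move=> h; split; [apply: h; left|move=> b hb; apply: h; right].
  by move=> [h1 h2] b [<-|hb] //; apply: h2.
exact: openI.
Qed.

Lemma open_forall_lt (Y : topologicalType) (K : nat) (S : nat -> set Y) :
  (forall m, open (S m)) -> open [set y | forall m, (m < K)%N -> S m y].
Proof.
move=> So; elim: K => [|K IH].
  have -> : [set y : Y | forall m, (m < 0)%N -> S m y] = setT.
    by apply/funext => y; apply/propext; split => // _ m.
  exact: openT.
have -> : [set y : Y | forall m, (m < K.+1)%N -> S m y] =
   S K `&` [set y | forall m, (m < K)%N -> S m y].
  apply/funext => y; apply/propext; split.
    by move=> h; split; [apply: h|move=> m hm; apply: h; apply: ltnW].
  move=> [h1 h2] m; rewrite ltnS leq_eqVlt => /orP [/eqP ->|hm] //.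
  exact: h2.
exact: openI.
Qed.

Lemma open_imp (Y : topologicalType) (P : Prop) (X : set Y) :
  open X -> open [set y | P -> X y].
Proof.
move=> Xo; have [p|np] := EM P.
  have -> : [set y | P -> X y] = X by apply/funext => y; apply/propext; split => [h|h _]; [exact: h p|exact: h].
  exact: Xo.
have -> : [set y | P -> X y] = setT by apply/funext => y; apply/propext; split => // _ /np [].
exact: openT.
Qed.

Lemma transfer (C : topologicalType -> Prop) (X R : topologicalType) (eta : X -> R)
  (hr : is_refl C eta) (T : topologicalType) (CT : C T)
  (Td : forall A : set T, open A) (a0 b0 : T) (ab : a0 <> b0)
  (al be : R -> T) (cal : continuous al) (cbe : continuous be)
  (G : T -> T -> bool) :
  (forall x, G (al (eta x)) (be (eta x)) = false) ->
  forall r, G (al r) (be r) = false.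
Proof.
move=> hG r.
pose h1 r := if G (al r) (be r) then b0 else a0.
have ch1 : continuous h1.
  apply: cont_to_discrete => y.
  exists ([set r' | al r' = al y] `&` [set r' | be r' = be y]); split.
    by apply: openI; apply: fiber_open.
  by split => // y' [/= e1 e2]; rewrite /h1 e1 e2.
have e : forall x, h1 (eta x) = cst a0 (eta x) by move=> x; rewrite /h1 hG.
have := refl_uniq hr CT ch1 (@cst_continuous _ _ a0) e r.
rewrite /h1; case: (G (al r) (be r)) => // h; exfalso; exact: ab.
Qed.

Arguments transfer {C X R eta} hr {T} CT Td {a0 b0} ab {al be} cal cbe G.
Lemma ZinC (C : topologicalType -> Prop) (refl : reflective C) (iso : iso_closed C)
  (T : topologicalType) (CT : C T) (a0 b0 : T) (ab : a0 <> b0)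
  (Tall : forall x : T, x = a0 \/ x = b0) (Td : forall A : set T, open A)
  (i : Idx) : C (Zt i).
Proof.
have [R [eta hr0]] := refl (Zt i).
have hr : is_refl C eta := hr0.
have [CR [ce U]] := hr.
have nb : forall v : T, v <> b0 -> v = a0 by move=> v; case: (Tall v).
pose phiX (tm : T0 * nat) (y : Zt i) : T :=
  if proj1_sig y == PX tm.1 tm.2 then b0 else a0.
pose phiS (y : Zt i) : T := match proj1_sig y with
  PA => a0 | PB => b0 | PX _ m => if (m <= iN i)%N then b0 else a0 end.
have cphiX : forall tm, continuous (phiX tm).
  move=> [t m]; apply: cont_to_discrete => y.
  have [e|ne] := boolP (proj1_sig y == PX t m).
    exists [set y' | proj1_sig y' = PX t m]; split.
      by rewrite openZE; split => -[].
    split; first exact/eqP.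
    by move=> y' /= e'; rewrite /phiX /= e' eqxx e.
  exists [set y' | proj1_sig y' <> PX t m]; split.
    rewrite openZE; split => _.
      by exists m.+1 => z t' m' e' _ _ hm /=; rewrite e' => -[_ em]; move: hm; rewrite em ltnn.
    by exists (t :: nil) => z t' m' e' _ hn /=; rewrite e' => -[et _]; apply: hn; left.
  split; first by move=> /= e'; move: ne; rewrite e' eqxx.
  move=> y' /= ne'; rewrite /phiX /= (negbTE ne).
  by have /negP /negbTE -> : ~ (proj1_sig y' == PX t m) by move/eqP.
have cphiS : continuous phiS.
  apply: cont_to_discrete => y.
  exists [set y' | phiS y' = phiS y]; split; last by split.
  rewrite openZE; split => /= hy.
    exists (iN i).+1 => z t m e _ hm _ /=; rewrite -hy /phiS e /=.
    by rewrite leqNgt hm.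
  by exists nil => z t m e hm _ /=; rewrite -hy /phiS e /= hm.
have [Gf HG] := choice (fun tm => U T CT (phiX tm) (cphiX tm)).
have cG : forall tm, continuous (Gf tm) by move=> tm; case: (HG tm).
have eG : forall tm y, Gf tm (eta y) = phiX tm y by move=> tm; case: (HG tm) => _ [].
have [Gs [cGs [eGs _]]] := U T CT phiS cphiS.
have ab' : (a0 == b0) = false by apply/eqP.
have ba' : (b0 == a0) = false by apply/eqP => /esym.
have F1 : forall t m t' m' r, Gf (t, m) r = b0 -> Gf (t', m') r = b0 ->
    PX t m = PX t' m'.
  move=> t m t' m' r h1 h2; apply: contrapT => ne.
  have hx : forall x, (Gf (t, m) (eta x) == b0) && (Gf (t', m') (eta x) == b0) = false.
    move=> x; rewrite !eG /phiX /=.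
    case: ifP => [/eqP e1|_]; last by rewrite ab'.
    rewrite eqxx /=.
    case: ifP => [/eqP e2|_]; last by rewrite ab'.
    by exfalso; apply: ne; rewrite -e1 -e2.
  have := transfer hr CT Td ab (cG (t, m)) (cG (t', m'))
    (fun u v => (u == b0) && (v == b0)) hx r.
  by rewrite /= h1 h2 eqxx.
have F2 : forall t m r, Gf (t, m) r = b0 -> (m <= iN i)%N -> Gs r = b0.
  move=> t m r h1 hm; apply: contrapT => ne; have ea := nb _ ne.
  have hx : forall x, (Gf (t, m) (eta x) == b0) && (Gs (eta x) == a0) = false.
    move=> x; rewrite eG eGs /phiX /=.
    case: ifP => [/eqP e1|_]; last by rewrite ab'.
    by rewrite /phiS e1 /= hm eqxx ba'.
  have := transfer hr CT Td ab (cG (t, m)) cGs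
    (fun u v => (u == b0) && (v == a0)) hx r.
  by rewrite /= h1 ea !eqxx.
have F3 : forall t m r, Gf (t, m) r = b0 -> (iN i < m)%N -> Gs r = a0.
  move=> t m r h1 hm; apply: nb => eb.
  have hx : forall x, (Gf (t, m) (eta x) == b0) && (Gs (eta x) == b0) = false.
    move=> x; rewrite eG eGs /phiX /=.
    case: ifP => [/eqP e1|_]; last by rewrite ab'.
    by rewrite /phiS e1 /= leqNgt hm /= ab' andbF.
  have := transfer hr CT Td ab (cG (t, m)) cGs
    (fun u v => (u == b0) && (v == b0)) hx r.
  by rewrite /= h1 eb !eqxx.
pose isX (r : R) (z : Zt i) := exists t m, proj1_sig z = PX t m /\ Gf (t, m) r = b0.
pose psi (r : R) : Zt i := match pselect (exists z, isX r z) with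
  | left h => proj1_sig (cid h)
  | right _ => if Gs r == b0 then bZ i else aZ i end.
have psiX : forall r z, isX r z -> psi r = z.
  move=> r z hz; rewrite /psi; case: pselect => [h|nh]; last by exfalso; apply: nh; exists z.
  case: (cid h) => z' hz' /=.
  move: hz hz' => [t [m [e1 g1]]] [t' [m' [e2 g2]]]; apply: Zt_eq.
  by rewrite e1 e2; apply: (F1 _ _ _ _ r).
have psiN : forall r, ~ (exists z, isX r z) ->
    psi r = if Gs r == b0 then bZ i else aZ i.
  by move=> r nh; rewrite /psi; case: pselect => // h; exfalso.
have notX_eta : forall y, (forall t m, proj1_sig y <> PX t m) ->
    ~ exists z, isX (eta y) z.
  move=> y hy [z [t [m [_ g]]]]; move: g; rewrite eG /phiX /=.
  by case: ifP => [/eqP e _|_ g']; [exact: hy e|exact: ab g'].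
have psi_eta : forall y, psi (eta y) = y.
  move=> y; case ey: (proj1_sig y) => [| |t m].
  - rewrite psiN; last by apply: notX_eta => t m; rewrite ey.
    by rewrite eGs /phiS ey ab'; apply: Zt_eq; rewrite ey.
  - rewrite psiN; last by apply: notX_eta => t m; rewrite ey.
    by rewrite eGs /phiS ey eqxx; apply: Zt_eq; rewrite ey.
  - apply: psiX; exists t, m; split => //.
    by rewrite eG /phiX /= ey eqxx.
have cpsi : continuous psi.
  apply/continuousP => Q; rewrite openZE => -[Qa Qb]; apply: open_local => r /= Qr.
  have [[z hz]|nh] := EM (exists z, isX r z).
    have [t [m [ez gz]]] := hz.
    exists [set r' | Gf (t, m) r' = b0]; split; first exact: fiber_open.
    split => // r' /= g'; rewrite /preimage /= (psiX r' z); last by exists t, m.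
    by rewrite -(psiX r z hz).
  rewrite /preimage /= psiN // in Qr.
  case: (Tall (Gs r)) => gs.
  - rewrite gs ab' in Qr; have [K HK] := Qa Qr; have [sF HsF] := proj2_sig i.1.
    exists ([set r' | Gs r' = a0] `&` [set r' | forall t, List.In t sF ->
      (iF i t -> forall m, (m < K)%N -> Gf (t, m) r' = a0)]).
    split.
      apply: openI; first exact: fiber_open.
      apply: open_forall_list => t; apply: open_imp; apply: open_forall_lt => m.
      exact: fiber_open.
    split.
      split => //= t _ Ft m mK; apply: nb => gb; apply: nh.
      by exists (exist _ (PX t m) (or_introl Ft)); exists t, m.
    move=> r' /= [g1 g2]; rewrite /preimage /=.
    have [[z hz]|nh'] := EM (exists z, isX r' z); last by rewrite psiN // g1 ab'.
    rewrite (psiX r' z hz); have [t [m [ez gz]]] := hz.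
    have hm : (iN i < m)%N.
      rewrite ltnNge; apply/negP => hm; have := F2 _ _ _ gz hm.
      by rewrite g1 => /ab.
    have Ft : iF i t.
      by have := proj2_sig z; rewrite ez /= => -[//|]; rewrite leqNgt hm.
    apply: (HK z t m) => //; rewrite leqNgt; apply/negP => mK.
    by have := g2 t (HsF t Ft) Ft m mK; rewrite gz => /esym /ab.
  - rewrite gs eqxx in Qr; have [H HH] := Qb Qr.
    exists ([set r' | Gs r' = b0] `&` [set r' | forall t, List.In t H ->
      forall m, (m < (iN i).+1)%N -> Gf (t, m) r' = a0]).
    split.
      apply: openI; first exact: fiber_open.
      apply: open_forall_list => t; apply: open_forall_lt => m.
      exact: fiber_open.
    split.
      split => //= t _ m mK; apply: nb => gb; apply: nh.
      by exists (exist _ (PX t m) (or_intror mK)); exists t, m.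
    move=> r' /= [g1 g2]; rewrite /preimage /=.
    have [[z hz]|nh'] := EM (exists z, isX r' z); last by rewrite psiN // g1 eqxx.
    rewrite (psiX r' z hz); have [t [m [ez gz]]] := hz.
    have hm : (m <= iN i)%N.
      rewrite leqNgt; apply/negP => hm; have := F3 _ _ _ gz hm.
      by rewrite g1 => /esym /ab.
    apply: (HH z t m) => // hin.
    by have := g2 t hin m hm; rewrite gz => /esym /ab.
have eta_psi : forall r, eta (psi r) = r.
  have cc : continuous (eta \o psi).
    by move=> r; apply: continuous_comp; [exact: cpsi|exact: ce].
  have cid' : continuous (@id R) by move=> r; exact: cvg_id.
  have e : forall y, (eta \o psi) (eta y) = id (eta y) by move=> y /=; rewrite psi_eta.
  by move=> r; have := refl_uniq hr CR cc cid' e r.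
apply: (iso R (Zt i) CR).
exists psi, eta; split; first exact: cpsi.
split; first exact: ce.
by split; [exact: eta_psi|exact: psi_eta].
Qed.

Theorem theorem7p9 (C : topologicalType -> Prop) :
  reflective C -> iso_closed C ->
  (forall X, C X -> hausdorff_space X) ->
  (exists T : topologicalType, C T /\
     (exists a b : T, a <> b /\ forall x, x = a \/ x = b) /\
     (forall A : set T, open A)) ->
  forall X : topologicalType, C X ->
    (fg_wrt_embeddings C X <-> (X -> False)).
Proof.
move=> refl iso haus [T [CT [[a0 [b0 [ab Tall]]] Td]]] X CX; split.
  move=> fg x.
  have [R [eta hr0]] := refl Ut.
  have hr : is_refl C eta := hr0.
  have [CR [ce _]] := hr.
  have coll := @eta_collapse C R eta hr (haus R CR).
  have := fg Idx leI Zt (@zmap) R (fun i (x : Zt i) => eta (vZ x)) directedI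
    (fun i => @ZinC C refl iso T CT a0 b0 ab Tall Td i) diagramI
    (fun i j h => @zmap_emb i j h) (@colimitI C R eta hr) (fun _ => eta PA) (@cst_continuous _ _ _).
  move=> [_ uq].
  pose i0 : Idx := (exist _ set0 lfin0, 0%N).
  have [j [h e]] := uq i0 (fun _ => aZ i0) (fun _ => bZ i0)
    (@cst_continuous _ _ _) (@cst_continuous _ _ _) (fun _ => erefl) (fun _ => coll).
  by have := congr1 (@proj1_sig _ _) (e x).
move=> Xe I le Z z Zc c [lrefl [_ [_ ub]]] _ _ _ _ f _; split.
  have [k _] := ub nil.
  exists k, (fun x => False_rect _ (Xe x)); split; last by move=> x; case: (Xe x).
  by move=> x; case: (Xe x).
move=> i g g' _ _ _ _; exists i, (lrefl i) => x; case: (Xe x).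
Qed.
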